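(* Let $B\subseteq A$ be commutative unital $\mathbb{R}$-algebras with $A=B[f]$ for some $f\in A$, let $Q\subseteq B$ be an archimedean quadratic module of $B$, and let $Q'\subseteq A$ be a quadratic module of $A$ with $Q\subseteq Q'\cap B$. If either $f$ is integral over $B$, or $N-f^2\in Q'$ for some $N\in\mathbb{N}$, then $Q'$ is archimedean in $A$.
   Context: A quadratic module of a commutative unital $\mathbb{R}$-algebra $C$ is a subset $Q\subseteq C$ with $Q+Q\subseteq Q$, $c^2Q\subseteq Q$ for all $c\in C$, and $1\in Q$. It is archimedean in $C$ if for every $c\in C$ there is an integer $n\ge1$ with $n+c\in Q$. *)

(* Defs.v *)
From HB Require Import structures.
From mathcomp Require Import all_boot all_order all_algebra.
From mathcomp Require Import reals.
Set Implicit Arguments. Unset Strict Implicit. Unset Printing Implicit Defensive.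
Import Order.TTheory GRing.Theory Num.Theory.
Local Open Scope ring_scope.

Definition is_subalgebra (R : realType) (A : comAlgType R) (B : A -> Prop) : Prop :=
  [/\ B 1,
      (forall x y, B x -> B y -> B (x + y)),
      (forall (r : R) x, B x -> B (r *: x)) &
      (forall x y, B x -> B y -> B (x * y))].

Definition quadratic_module (R : realType) (A : comAlgType R) (C Q : A -> Prop) : Prop :=
  [/\ (forall x, Q x -> C x),
      (forall x y, Q x -> Q y -> Q (x + y)),
      (forall c x, C c -> Q x -> Q (c ^+ 2 * x)) &
      Q 1].

Definition archimedean_in (R : realType) (A : comAlgType R) (C Q : A -> Prop) : Prop :=
  forall c, C c -> exists n : nat, (1 <= n)%N /\ Q (n%:R + c).

Definition generated_by (R : realType) (A : comAlgType R) (B : A -> Prop) (f : A) : Prop :=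
  forall a : A, exists p : {poly A}, (forall i, B p`_i) /\ a = p.[f].

Definition integral_over (R : realType) (A : comAlgType R) (B : A -> Prop) (f : A) : Prop :=
  exists p : {poly A}, [/\ p \is monic, (forall i, B p`_i) & root p f].

(* Main.v *)
Require Import Defs.
From HB Require Import structures.
From mathcomp Require Import all_boot all_order all_algebra.
From mathcomp Require Import reals.
From mathcomp Require Import ring lra.
Import Order.TTheory GRing.Theory Num.Theory.
Local Open Scope ring_scope.

Section QM.
Variables (R : realType) (A : comAlgType R) (M : A -> Prop).
Hypothesis Madd : forall x y, M x -> M y -> M (x + y).
Hypothesis Mmul : forall c x, M x -> M (c ^+ 2 * x).
Hypothesis M1 : M 1.
Local Notation ia := (in_alg A).

Lemma Msq c : M (c ^+ 2).
Proof using Madd Mmul M1. by rewrite -[c ^+ 2]mulr1; apply: Mmul. Qed.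

Lemma M0 : M 0.
Proof using Madd Mmul M1. by have := Msq 0; rewrite expr0n. Qed.

Lemma Mscale r x : 0 <= r -> M x -> M (ia r * x).
Proof using Madd Mmul M1.
move=> r0 Mx; have -> : ia r = (ia (Num.sqrt r)) ^+ 2.
  by rewrite -rmorphXn /= sqr_sqrtr.
exact: Mmul.
Qed.

Lemma Mcst r : 0 <= r -> M (ia r).
Proof using Madd Mmul M1. by move=> r0; rewrite -[ia r]mulr1; apply: Mscale. Qed.

Lemma Mnat n x : M x -> M (n%:R * x).
Proof using Madd Mmul M1. by move=> Mx; have := @Mscale n%:R x (ler0n _ n) Mx; rewrite rmorph_nat. Qed.

Lemma Mcancel r x : 0 < r -> M (ia r * x) -> M x.
Proof using Madd Mmul M1.
move=> r0 Mx; have -> : x = ia r^-1 * (ia r * x).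
  by rewrite mulrA -rmorphM /= mulVf ?gt_eqF // ?rmorph1 ?scale1r mul1r.
by apply: Mscale => //; rewrite invr_ge0 ltW.
Qed.

Definition Bd a := exists r : R, M (ia r - a) /\ M (ia r + a).

Lemma Bd_pos a : Bd a -> exists r, 0 < r /\ M (ia r - a) /\ M (ia r + a).
Proof using Madd Mmul M1.
move=> [r [h1 h2]]; exists (`|r| + 1); split.
  by have := normr_ge0 r; lra.
have e : 0 <= `|r| + 1 - r by have := ler_norm r; lra.
split.
  have -> : ia (`|r| + 1) - a = ia (`|r| + 1 - r) + (ia r - a) by ring.
  by apply: Madd => //; apply: Mcst.
have -> : ia (`|r| + 1) + a = ia (`|r| + 1 - r) + (ia r + a) by ring.
by apply: Madd => //; apply: Mcst.
Qed.

Lemma Bd_sq a : Bd a -> exists s, 0 <= s /\ M (ia s - a ^+ 2).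
Proof using Madd Mmul M1.
move=> /Bd_pos [r [r0 [h1 h2]]]; exists (r ^+ 2); split; first exact: sqr_ge0.
apply: (@Mcancel (2 * r)); first lra.
have -> : ia (2 * r) * (ia (r ^+ 2) - a ^+ 2) =
  (ia r + a) ^+ 2 * (ia r - a) + (ia r - a) ^+ 2 * (ia r + a) by ring.
by apply: Madd; apply: Mmul.
Qed.

Lemma Bd_of_sq a s : M (ia s - a ^+ 2) -> Bd a.
Proof using Madd Mmul M1.
move=> h; exists (s + 1); split; apply: (@Mcancel 4) => //.
  have -> : ia 4 * (ia (s + 1) - a) =
    (ia 4 * (ia s - a ^+ 2) + (2%:R * a - 1) ^+ 2) + ia 3 by ring.
  apply: Madd; last by apply: Mcst; lra.
  apply: Madd; last exact: Msq. by apply: Mscale => //; lra.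
have -> : ia 4 * (ia (s + 1) + a) =
  (ia 4 * (ia s - a ^+ 2) + (2%:R * a + 1) ^+ 2) + ia 3 by ring.
apply: Madd; last by apply: Mcst; lra.
  apply: Madd; last exact: Msq. by apply: Mscale => //; lra.
Qed.

Lemma Bd_add a b : Bd a -> Bd b -> Bd (a + b).
Proof using Madd Mmul M1.
move=> [r [h1 h2]] [q [h3 h4]]; exists (r + q); split.
  have -> : ia (r + q) - (a + b) = (ia r - a) + (ia q - b) by ring.
  by apply: Madd.
have -> : ia (r + q) + (a + b) = (ia r + a) + (ia q + b) by ring.
by apply: Madd.
Qed.

Lemma Bd_opp a : Bd a -> Bd (- a).
Proof using Madd Mmul M1. by move=> [r [h1 h2]]; exists r; rewrite opprK; split. Qed.

Lemma Bd_cst r : Bd (ia r).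
Proof using Madd Mmul M1.
exists `|r|; split; [have -> : ia `|r| - ia r = ia (`|r| - r) by ring
                    |have -> : ia `|r| + ia r = ia (`|r| + r) by ring];
  apply: Mcst.
  by have := ler_norm r; lra.
by have := ler_norm (- r); rewrite normrN; lra.
Qed.

Lemma Bd_mul a b : Bd a -> Bd b -> Bd (a * b).
Proof using Madd Mmul M1.
move=> ha hb.
have [s1 [s10 h1]] := Bd_sq _ (Bd_add _ _ ha hb).
have [s2 [s20 h2]] := Bd_sq _ (Bd_add _ _ ha (Bd_opp _ hb)).
exists (s1 + s2); split; apply: (@Mcancel 4) => //.
  have -> : ia 4 * (ia (s1 + s2) - a * b) =
     (ia s1 - (a + b) ^+ 2) + (a - b) ^+ 2 + ia (3 * s1 + 4 * s2) by ring.
  by apply: Madd; [apply: Madd => //; apply: Msq|apply: Mcst; lra].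
have -> : ia 4 * (ia (s1 + s2) + a * b) =
   (ia s2 - (a - b) ^+ 2) + (a + b) ^+ 2 + ia (4 * s1 + 3 * s2) by ring.
by apply: Madd; [apply: Madd => //; apply: Msq|apply: Mcst; lra].
Qed.


Lemma Bd0 : Bd 0.
Proof using Madd Mmul M1. by have := Bd_cst 0; rewrite rmorph0. Qed.

Lemma Bd1 : Bd 1.
Proof using Madd Mmul M1. by have := Bd_cst 1; rewrite rmorph1. Qed.

Lemma Bd_exp a n : Bd a -> Bd (a ^+ n).
Proof using Madd Mmul M1.
move=> ha; elim: n => [|n IH]; first by rewrite expr0; exact: Bd1.
by rewrite exprS; apply: Bd_mul.
Qed.

Lemma Bd_sum n (F : nat -> A) : (forall i, (i < n)%N -> Bd (F i)) ->
  Bd (\sum_(i < n) F i).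
Proof using Madd Mmul M1.
move=> h; apply: (big_ind Bd); [exact: Bd0|exact: Bd_add|].
by move=> i _; apply: h.
Qed.

Section Interp.
Variable t : A.
Local Notation a k := ((t ^+ k) ^+ 2).

Lemma Zk k : M (1 + k%:R * a k.+1 - k.+1%:R * a k).
Proof using Madd Mmul M1.
elim: k => [|k IH].
  have -> : 1 + 0%:R * a 1 - 1%:R * a 0 = 0 by rewrite expr0; ring.
  exact: M0.
have -> : 1 + k.+1%:R * a k.+2 - k.+2%:R * a k.+1 =
   (1 + k%:R * a k.+1 - k.+1%:R * a k) + k.+1%:R * (t ^+ k * (t ^+ 2 - 1)) ^+ 2.
  by rewrite !exprSr; ring.
by apply: Madd => //; apply: Mnat; apply: Msq.
Qed.

Lemma step k : M (1 + a k.+1 - a k).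
Proof using Madd Mmul M1.
apply: (@Mcancel k.+1%:R); first by rewrite ltr0Sn.
have -> : ia k.+1%:R * (1 + a k.+1 - a k) =
  (1 + k%:R * a k.+1 - k.+1%:R * a k) + k%:R * 1 + a k.+1.
  by rewrite rmorph_nat; ring.
by apply: Madd; [apply: Madd; [apply: Zk|apply: Mnat]|apply: Msq].
Qed.

Lemma interp i n : M (n%:R + a (i + n) - a i).
Proof using Madd Mmul M1.
elim: n => [|n IH]; first by rewrite addn0 add0r subrr; apply: M0.
have -> : n.+1%:R + a (i + n.+1) - a i =
   (n%:R + a (i + n) - a i) + (1 + a (i + n).+1 - a (i + n)).
  by rewrite addnS; ring.
by apply: Madd => //; apply: step.
Qed.
End Interp.

Lemma CS n (x : nat -> A) Y : M Y -> (forall i, (i < n)%N -> M (Y - x i ^+ 2)) ->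
  M (ia (4 ^+ n) * Y - (\sum_(i < n) x i) ^+ 2).
Proof using Madd Mmul M1.
move=> MY; elim: n => [|n IH] h.
  by rewrite big_ord0 expr0 rmorph1 mul1r expr0n subr0.
rewrite big_ord_recr /=.
set S := \sum_(i < n) x i.
have IH' := IH (fun i hi => h i (ltnW hi)).
have hn := h n (ltnSn n).
have q1 : 1 <= (4 : R) ^+ n by apply: exprn_ege1; lra.
have -> : ia (4 ^+ n.+1) * Y - (S + x n) ^+ 2 =
   2%:R * (ia (4 ^+ n) * Y - S ^+ 2) + (S - x n) ^+ 2 + 2%:R * (Y - x n ^+ 2)
   + ia (2 * 4 ^+ n - 2) * Y.
  by rewrite exprS; ring.
apply: Madd; last by apply: Mscale => //; lra.
apply: Madd; last by apply: Mnat.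
by apply: Madd; [apply: Mnat|apply: Msq].
Qed.

Lemma unif n (c : nat -> A) : (forall i, (i < n)%N -> Bd (c i)) ->
  exists m, 0 <= m /\ forall i, (i < n)%N -> M (ia m - c i ^+ 2).
Proof using Madd Mmul M1.
elim: n => [|n IH] h.
  by exists 0; split => // i.
have [m [m0 hm]] := IH (fun i hi => h i (ltnW hi)).
have [s [s0 hs]] := Bd_sq _ (h n (ltnSn n)).
exists (m + s); split; first lra.
move=> i; rewrite ltnS leq_eqVlt => /orP [/eqP ->|hi].
  have -> : ia (m + s) - c n ^+ 2 = ia m + (ia s - c n ^+ 2) by ring.
  by apply: Madd => //; apply: Mcst.
have -> : ia (m + s) - c i ^+ 2 = ia s + (ia m - c i ^+ 2) by ring.
by apply: Madd; [apply: Mcst|apply: hm].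
Qed.


Lemma Bd_integral (f : A) (p : {poly A}) : p \is monic -> (forall i, Bd p`_i) ->
  root p f -> Bd f.
Proof using Madd Mmul M1.
move=> pm hB /rootP pf.
set d := (size p).-1.
have sp : size p = d.+1.
  by rewrite /d prednK // size_poly_gt0 monic_neq0.
have rel : f ^+ d = - \sum_(i < d) p`_i * f ^+ i.
  move: pf; rewrite horner_coef sp big_ord_recr /=.
  have -> : p`_d = 1 by rewrite /d -lead_coefE; apply/monicP.
  by rewrite mul1r => /eqP; rewrite addrC addr_eq0 => /eqP.
have d1 : (0 < d)%N.
  case: (posnP d) => // d0; move: rel; rewrite d0 big_ord0 oppr0 expr0 => /eqP.
  by rewrite oner_eq0.
have [m [m0 hm]] := unif d (fun i => p`_i) (fun i _ => hB i).
set K := (4 : R) ^+ d.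
have K1 : 1 <= K by apply: exprn_ege1; lra.
set u := 1 + 2 * K * m.
have u1 : 1 <= u by rewrite /u; nra.
set s := u^-1.
have su : s * u = 1 by rewrite /s mulVf // gt_eqF //; lra.
have s0 : 0 < s by rewrite /s invr_gt0; lra.
have s1 : s <= 1 by nra.
set g := ia s * f.
set x := fun i : nat => (ia (s ^+ d) * (- (p`_i * f ^+ i)) : A).
have sumx : \sum_(i < d) x i = g ^+ d.
  by rewrite -big_distrr sumrN -rel /g exprMn rmorphXn.
set Y := ia d%:R + (g ^+ d) ^+ 2.
have MY : M Y by apply: Madd; [apply: Mcst|apply: Msq].
have hx : forall i, (i < d)%N -> M (ia (m * s ^+ 2) * Y - x i ^+ 2).
  move=> i hi.
  have [k hk] : exists k, (d - i)%N = k.+1 by exists (d - i)%N.-1; rewrite prednK // subn_gt0.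
  have w0 : 0 <= s ^+ k by apply: exprn_ge0; lra.
  have w1 : s ^+ k <= 1 by apply: exprn_ile1; lra.
  have esd : s ^+ d = s ^+ k.+1 * s ^+ i by rewrite -exprD -hk subnK // ltnW.
  have xe : x i ^+ 2 = ia ((s ^+ k.+1) ^+ 2) * (p`_i ^+ 2 * (g ^+ i) ^+ 2).
    rewrite /x /g /= esd -!in_algE !rmorphM !rmorphXn.
    change (GRing.GRing_in_alg__canonical__GRing_RMorphism A s) with (in_alg A s).
    move: (in_alg A s) => S; rewrite [(S * f) ^+ i]exprMn.
    move: (S ^+ k.+1) (S ^+ i) (f ^+ i) => a1 a2 a3; ring.
  have ed : (d%:R : A) = (d - i)%N%:R + i%:R by rewrite -natrD subnK // ltnW.
  have hint := interp g i (d - i)%N; rewrite subnKC ?(ltnW hi) // in hint.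
  have -> : ia (m * s ^+ 2) * Y - x i ^+ 2 =
     ia (m * s ^+ 2 - (s ^+ k.+1) ^+ 2 * m) * Y
     + ia ((s ^+ k.+1) ^+ 2) * ((g ^+ i) ^+ 2 * (ia m - p`_i ^+ 2))
     + ia ((s ^+ k.+1) ^+ 2 * m) * (((d - i)%N%:R + (g ^+ d) ^+ 2 - (g ^+ i) ^+ 2) + i%:R).
    by rewrite xe /Y rmorph_nat ed; ring.
  apply: Madd; last first.
    apply: Mscale; first by apply: mulr_ge0 => //; apply: sqr_ge0.
    by apply: Madd => //; rewrite -[i%:R]mulr1; apply: Mnat.
  apply: Madd; last first.
    apply: Mscale; first exact: sqr_ge0.
    by apply: Mmul; apply: hm.
  apply: Mscale => //.
  rewrite [s ^+ k.+1]exprS; move: (s ^+ k) w0 w1 => w w0 w1.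
  have -> : m * s ^+ 2 - (s * w) ^+ 2 * m = (m * s ^+ 2) * (1 - w ^+ 2) by ring.
  apply: mulr_ge0; first by apply: mulr_ge0 => //; apply: sqr_ge0.
  by rewrite subr_ge0 expr2; nra.
have MY2 : M (ia (m * s ^+ 2) * Y) by apply: Mscale => //; apply: mulr_ge0 => //; apply: sqr_ge0.
have hcs := CS d x _ MY2 hx; rewrite sumx in hcs.
have c2 : K * (m * s ^+ 2) * 2 <= 1.
  have -> : K * (m * s ^+ 2) * 2 = s * (s * u) - s ^+ 2 by rewrite /u; ring.
  by rewrite su mulr1; nra.
have Md : M (ia d%:R - (g ^+ d) ^+ 2).
  have -> : ia d%:R - (g ^+ d) ^+ 2 =
     2%:R * (ia K * (ia (m * s ^+ 2) * Y) - (g ^+ d) ^+ 2)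
     + ia ((1 - 2 * (K * (m * s ^+ 2))) * d%:R)
     + ia (1 - 2 * (K * (m * s ^+ 2))) * (g ^+ d) ^+ 2.
    by rewrite /Y; ring.
  apply: Madd; last by apply: Mscale; [lra|apply: Msq].
  apply: Madd; first by apply: Mnat.
  by apply: Mcst; apply: mulr_ge0; [lra|apply: ler0n].
have hint := interp g 1 (d - 1)%N; rewrite subnKC // expr1 in hint.
have hg : Bd g.
  apply: (@Bd_of_sq _ ((d - 1)%N%:R + d%:R)).
  have -> : ia ((d - 1)%N%:R + d%:R) - g ^+ 2 =
    ((d - 1)%N%:R + (g ^+ d) ^+ 2 - g ^+ 2) + (ia d%:R - (g ^+ d) ^+ 2).
    by rewrite rmorphD !rmorph_nat; ring.
  by apply: Madd.
have -> : f = ia s^-1 * g.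
  by rewrite /g mulrA -rmorphM /= mulVf ?gt_eqF // ?rmorph1 ?scale1r mul1r.
by apply: Bd_mul => //; apply: Bd_cst.
Qed.

End QM.

Theorem proposition3p6 (R : realType) (A : comAlgType R) (B : A -> Prop) (f : A)
    (Q Q' : A -> Prop) :
  is_subalgebra B ->
  generated_by B f ->
  quadratic_module B Q ->
  archimedean_in B Q ->
  quadratic_module (fun _ => True) Q' ->
  (forall x, Q x -> Q' x /\ B x) ->
  (integral_over B f \/ exists N : nat, Q' (N%:R - f ^+ 2)) ->
  archimedean_in (fun _ => True) Q'.
Proof.
move=> [B1 Badd Bscal Bmul] gen [QB Qadd Qmul Q1] arch [_ Madd Mmul0 M1] QQ' hf.
have Mmul : forall c x, Q' x -> Q' (c ^+ 2 * x) by move=> c x; apply: Mmul0.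
pose ia := in_alg A.
have hBB : forall b, B b -> Bd _ _ Q' b.
  move=> b hb.
  have hb' : B (- b) by rewrite -scaleN1r; apply: Bscal.
  have [n1 [_ h1]] := arch b hb.
  have [n2 [_ h2]] := arch (- b) hb'.
  have [q1 _] := QQ' _ h1; have [q2 _] := QQ' _ h2.
  exists (n1 + n2)%:R; rewrite rmorph_nat; split.
    have -> : (n1 + n2)%:R - b = (n2%:R + - b) + n1%:R * 1 by rewrite natrD; ring.
    by apply: (Madd) => //; apply: (@Mnat _ _ _ Madd Mmul M1).
  have -> : (n1 + n2)%:R + b = (n1%:R + b) + n2%:R * 1 by rewrite natrD; ring.
  by apply: (Madd) => //; apply: (@Mnat _ _ _ Madd Mmul M1).
have hf' : Bd _ _ Q' f.
  case: hf => [[p [pm pB pr]]|[N hN]].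
    by apply: (@Bd_integral _ _ _ Madd Mmul M1 _ _ pm) => // i; apply: hBB.
  by apply: (@Bd_of_sq _ _ _ Madd Mmul M1 _ N%:R); rewrite rmorph_nat.
move=> c _.
have [p [pB ->]] := gen c.
have hc : Bd _ _ Q' p.[f].
  rewrite horner_coef.
  apply: (@Bd_sum _ _ _ Madd Mmul M1 _ (fun i => p`_i * f ^+ i)) => i _.
  by apply: (@Bd_mul _ _ _ Madd Mmul M1); [apply: hBB|apply: (@Bd_exp _ _ _ Madd Mmul M1)].
have [r [_ h2]] := hc.
exists (Num.Def.trunc r).+1; split => //.
have hr := truncnS_gt r.
have -> : (Num.Def.trunc r).+1%:R + p.[f] =
  in_alg A ((Num.Def.trunc r).+1%:R - r) + (in_alg A r + p.[f]).
  by rewrite rmorphB rmorph_nat; ring.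
apply: (Madd) => //; apply: (@Mcst _ _ _ Madd Mmul M1); lra.
Qed.
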